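(* Let $\beta>0$, $\gamma\ge0$, $0\le q<s<\infty$, and let $\mu$ be a finite positive Borel measure on $[0,1)$. The following are equivalent: (1) $\mu$ is a $\gamma$-logarithmic $s$-Carleson measure; (2) $\displaystyle\sup_{w\in\mathbb{D}}\int_{[0,1)}\frac{(1-|w|)^\beta\log^\gamma\frac{e}{1-|w|}}{(1-t)^q(1-|w|t)^{s+\beta-q}}\,d\mu(t)<\infty$; (3) $\displaystyle\sup_{w\in\mathbb{D}}\int_{[0,1)}\frac{(1-|w|)^\beta\log^\gamma\frac{e}{1-|w|}}{(1-t)^q|1-wt|^{s+\beta-q}}\,d\mu(t)<\infty$; (4) $\displaystyle\sup_{w\in\mathbb{D}}\int_{[0,1)}\frac{(1-|w|)^\beta\log^\gamma\frac{e}{1-t}}{(1-t)^q(1-|w|t)^{s+\beta-q}}\,d\mu(t)<\infty$.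
   Context: $\mathbb{D}$ is the open unit disc. For $\gamma\ge0$ and $s>0$, a finite positive Borel measure $\mu$ on $[0,1)$ is a $\gamma$-logarithmic $s$-Carleson measure if there is $C>0$ with $\log^\gamma\!\big(\frac{e}{1-t}\big)\mu([t,1))\le C(1-t)^s$ for all $t\in[0,1)$. *)

(* Defs.v *)
From mathcomp Require Import all_boot all_algebra all_classical all_reals all_analysis.
From mathcomp Require Import complex.
Import GRing.Theory Num.Theory.
Local Open Scope ring_scope.
Local Open Scope classical_set_scope.

Definition cmod {R : realType} (w : R[i]) : R := complex.Re `|w|.

Definition loge {R : realType} (g x : R) : R := powR (ln (expR 1 / x)) g.

Definition log_carleson {R : realType} (mu : {measure set R -> \bar R})
  (g s : R) : Prop :=
  exists C : R, 0 < C /\ forall t : R, 0 <= t < 1 ->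
    ((loge g (1 - t))%:E * mu `[t, 1%R[%classic <= (C * powR (1 - t) s)%:E)%E.

(* Main.v *)
Require Import Defs.
From mathcomp Require Import all_boot all_algebra all_classical all_reals all_analysis.
From mathcomp Require Import complex.
From mathcomp Require Import measurable_realfun lebesgue_integral.
From mathcomp Require Import ring lra.
Import GRing.Theory Num.Theory.
Import order.Order.TTheory.
Local Open Scope ring_scope.
Local Open Scope classical_set_scope.

Lemma my_le_integral (R : realType) (mu : {measure set R -> \bar R}) (D : set R)
  (f1 f2 : R -> \bar R) :
  (forall x, D x -> (0 <= f1 x)%E) -> (forall x, D x -> (f1 x <= f2 x)%E) ->
  (\int[mu]_(x in D) f1 x <= \int[mu]_(x in D) f2 x)%E.
Proof.
move=> f10 f12.
have f20 : forall x, D x -> (0 <= f2 x)%E.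
  by move=> x Dx; apply: le_trans (f10 _ Dx) (f12 _ Dx).
rewrite !ge0_integralE//.
apply: le_ereal_sup => _ /= [h hf1 <-]; exists h => //= x.
apply: le_trans (hf1 x) _.
by apply: lee_restrict.
Qed.

Definition dd (R : realType) (n : nat) : R := (2 ^+ n)^-1.
Definition ee (R : realType) (n : nat) : R := (2 ^+ n.+1)^-1.

Lemma dd_gt0 (R : realType) n : 0 < dd R n.
Proof. by rewrite /dd invr_gt0 exprn_gt0. Qed.
Lemma ee_gt0 (R : realType) n : 0 < ee R n.
Proof. by rewrite /ee invr_gt0 exprn_gt0. Qed.
Lemma dd_le1 (R : realType) n : dd R n <= 1.
Proof. rewrite /dd invf_le1 ?exprn_gt0//; apply: exprn_ege1; by rewrite ler1n. Qed.
Lemma ee_dd (R : realType) n : ee R n = dd R n / 2.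
Proof. by rewrite /ee /dd exprSr invfM. Qed.
Lemma ddS (R : realType) n : dd R n.+1 = ee R n.
Proof. by []. Qed.

Lemma dyadic (R : realType) (t : R) : 0 <= t < 1 ->
  exists n, ee R n < 1 - t <= dd R n.
Proof.
move=> /andP[t0 t1].
have t1' : 0 < 1 - t by rewrite subr_gt0.
have ex : exists n, ee R n < 1 - t.
  have y0 : 0 <= (1 - t)^-1 by rewrite invr_ge0 ltW.
  exists (Num.Def.archi_bound (1 - t)^-1).
  set N := Num.Def.archi_bound _.
  have h1 := archi_boundP y0; rewrite -/N in h1.
  rewrite /ee -(invrK (1 - t)) ltf_pV2 ?posrE ?exprn_gt0 ?invr_gt0//.
  apply: (lt_trans h1).
  have : (N < 2 ^ N.+1)%N by apply: (ltn_trans (ltn_expl N (isT : (1 < 2)%N))); rewrite ltn_exp2l.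
  by rewrite -(ltr_nat R) natrX.
case: (ex_minnP ex) => n hn hmin.
exists n; rewrite hn /=.
case: n hn hmin => [|k] hn hmin.
  by rewrite /dd expr0 invr1 lerBlDr lerDl.
rewrite ddS leNgt; apply/negP => hk.
by have := hmin k hk; rewrite ltnn.
Qed.

Lemma int_le_series (R : realType) (mu : {measure set R -> \bar R})
  (f : R -> R) (a : nat -> R) :
  (forall n, 0 <= a n) ->
  (forall t, 0 <= t < 1 -> 0 <= f t) ->
  (forall n t, 0 <= t < 1 -> ee R n < 1 - t <= dd R n -> f t <= a n) ->
  (\int[mu]_(t in `[0%R, 1%R[%classic) (f t)%:E <=
     \sum_(0 <= n <oo) ((a n)%:E * mu `[(1 - dd R n)%R, 1%R[%classic))%E.
Proof.
move=> a0 f0 fa.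
set D := `[0%R, 1%R[%classic.
set E := fun n : nat => `[(1 - dd R n)%R, 1%R[%classic.
have mD : measurable D by exact: measurable_itv.
have mE : forall n, measurable (E n) by move=> n; exact: measurable_itv.
apply: (@le_trans _ _ (\int[mu]_(t in D) \sum_(0 <= n <oo) (a n * \1_(E n) t)%:E)%E).
  apply: my_le_integral.
    by move=> t; rewrite /D /= in_itv /= => /f0; rewrite lee_fin.
  move=> t Dt; have Dt' : 0 <= t < 1 by move: Dt; rewrite /D /= in_itv.
  have [n hn] := @dyadic R t Dt'.
  rewrite (@nneseriesD1 _ _ n) //; last first.
    by move=> k _; rewrite lee_fin mulr_ge0.
  apply: le_trans (leeDl _ _); last first.
    by apply: nneseries_ge0 => k _ _; rewrite lee_fin mulr_ge0.
  have tE : E n t.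
    rewrite /E /= in_itv /=; case/andP: Dt' => _ ->; rewrite andbT.
    by case/andP: hn => _; rewrite lerBlDr addrC -lerBlDr.
  by rewrite indicE mem_set // mulr1 lee_fin; apply: fa.
rewrite integral_nneseries //; last first.
- by move=> n t _; rewrite lee_fin mulr_ge0.
- move=> n; apply/measurable_EFinP; apply: measurable_funM => //.
apply: lee_nneseries.
  by move=> n _ _; apply: integral_ge0 => t _; rewrite lee_fin mulr_ge0.
move=> n _.
rewrite (integralZl_indic mD (fun=> E n) (a n)) //; last by move=> /lt_le_trans /(_ (a0 n)); rewrite ltxx.
rewrite integral_indic // setIidl //.
move=> t; rewrite /E /D /= !in_itv /= => /andP[h1 ->]; rewrite andbT.
apply: le_trans h1; rewrite subr_ge0; exact: dd_le1.
Qed.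

Lemma lnE_div {R : realType} {y : R} : 0 < y -> ln (expR 1 / y) = 1 - ln y.
Proof.
by move=> y0; rewrite ln_div ?posrE ?expR_gt0 // expRK.
Qed.

Lemma L_ge1 {R : realType} {y : R} : 0 < y <= 1 -> 1 <= ln (expR 1 / y).
Proof.
move=> /andP[y0 y1]; rewrite lnE_div // lerDl oppr_ge0; exact: ln_le0.
Qed.

Lemma loge_gt0 {R : realType} {g y : R} : 0 < y <= 1 -> 0 < loge g y.
Proof.
move=> hy; rewrite /loge; apply: powR_gt0.
by apply: lt_le_trans (L_ge1 hy).
Qed.

Lemma series_bound (R : realType) (mu : {measure set R -> \bar R})
  (a T : nat -> R) (g s C K : R) :
  0 <= C -> (forall n, 0 <= a n) ->
  (forall t : R, 0 <= t < 1 ->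
    ((loge g (1 - t))%:E * mu `[t, 1%R[%classic <= (C * powR (1 - t) s)%:E)%E) ->
  (forall n, a n * ((loge g (dd R n))^-1 * (C * powR (dd R n) s)) <= T n) ->
  (forall M, \sum_(0 <= n < M) T n <= K) ->
  (\sum_(0 <= n <oo) ((a n)%:E * mu `[(1 - dd R n)%R, 1%R[%classic) <= K%:E)%E.
Proof.
move=> C0 a0 hC haT hK.
apply: (@le_trans _ _ (\sum_(0 <= n <oo) (T n)%:E)%E).
  apply: lee_nneseries.
    by move=> n _ _; apply: mule_ge0; rewrite ?lee_fin.
  move=> n _.
  have hd : 0 < dd R n <= 1 by rewrite dd_gt0 dd_le1.
  have ht : 0 <= 1 - dd R n < 1.
    by rewrite subr_ge0 dd_le1 /= ltrBlDr ltrDl dd_gt0.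
  have := hC _ ht; rewrite opprB addrC subrK.
  rewrite -lee_pdivlMl ?loge_gt0 // => h.
  apply: le_trans (lee_wpmul2l _ h) _; first by rewrite lee_fin.
  by rewrite -!EFinM lee_fin.
apply: lime_le.
  by apply: is_cvg_nneseries => n _ _; rewrite lee_fin; apply: le_trans (haT n); apply: mulr_ge0 => //; apply: mulr_ge0; [rewrite invr_ge0 ltW ?loge_gt0 // dd_gt0 dd_le1 | apply: mulr_ge0; [exact: C0 | exact: powR_ge0]].
apply: nearW => M.
by rewrite sumEFin lee_fin; exact: hK.
Qed.

Lemma geom_claim (R : realType) (rho : R) (v : nat -> R) :
  0 < rho < 1 -> (forall n, 0 < v n) -> (forall n, rho * v n.+1 = v n) ->
  forall M, (1 - rho) * \sum_(0 <= n < M) (if v n <= 1 then v n else (v n)^-1)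
    <= Num.min (rho * v M) 1 + 1 - Num.min 1 (v M)^-1.
Proof.
move=> /andP[r0 r1] v0 hv; elim=> [|M IH].
  rewrite big_geq // mulr0.
  have h1 : 0 <= Num.min (rho * v 0%N) 1 by rewrite le_min ler01 andbT mulr_ge0 // ltW.
  have h2 : Num.min 1 (v 0%N)^-1 <= 1 by rewrite ge_min lexx.
  lra.
rewrite big_nat_recr //= mulrDr.
have vM := v0 M; have vM1 := v0 M.+1; have hvM := hv M.
have iv : (v M)^-1 * v M = 1 by rewrite mulVf // gt_eqF.
have iv1 : (v M.+1)^-1 * v M.+1 = 1 by rewrite mulVf // gt_eqF.
have ivM1 : (v M.+1)^-1 = rho * (v M)^-1.
  by rewrite -hvM invfM mulrA mulfV ?mul1r // gt_eqF.
case: ifPn => hle.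
- have e1 : Num.min (rho * v M) 1 = rho * v M.
    by apply/min_l; apply: le_trans hle; rewrite ger_pMl // ltW.
  have e2 : Num.min 1 (v M)^-1 = 1 by apply/min_l; rewrite invf_ge1.
  have e3 : Num.min (rho * v M.+1) 1 = v M by rewrite hvM; exact/min_l.
  have e4 : Num.min 1 (v M.+1)^-1 <= 1 by rewrite ge_min lexx.
  rewrite e1 e2 in IH; rewrite e3.
  lra.
- rewrite -ltNge in hle.
  have e2 : Num.min 1 (v M)^-1 = (v M)^-1.
    by apply/min_r; rewrite invf_le1 // ltW.
  have e3 : Num.min (rho * v M.+1) 1 = 1 by rewrite hvM; apply/min_r; exact: ltW.
  have e4 : Num.min 1 (v M.+1)^-1 = rho * (v M)^-1.
    rewrite ivM1; apply/min_r; apply: le_trans (ltW r1); rewrite ger_pMr //.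
    by rewrite invf_le1 // ltW.
  have e1 : Num.min (rho * v M) 1 <= 1 by rewrite ge_min lexx orbT.
  rewrite e2 in IH; rewrite e3 e4.
  lra.
Qed.

Lemma geom_sum (R : realType) (rho : R) (v : nat -> R) :
  0 < rho < 1 -> (forall n, 0 < v n) -> (forall n, rho * v n.+1 = v n) ->
  forall M, \sum_(0 <= n < M) (if v n <= 1 then v n else (v n)^-1) <= 2 / (1 - rho).
Proof.
move=> hr v0 hv M; have := @geom_claim R rho v hr v0 hv M.
case/andP: hr => r0 r1.
have h1 : Num.min (rho * v M) 1 <= 1 by rewrite ge_min lexx orbT.
have h2 : 0 <= Num.min 1 (v M)^-1 by rewrite le_min ler01 invr_ge0 ltW.
move=> h; rewrite ler_pdivlMr ?subr_gt0 //; rewrite mulrC; lra.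
Qed.

Lemma powRE' {R : realType} (a x : R) : 0 < a -> powR a x = expR (x * ln a).
Proof. by move=> a0; rewrite /powR gt_eqF. Qed.





Lemma logeE {R : realType} (g y : R) : 0 < y <= 1 ->
  loge g y = expR (g * ln (1 - ln y)).
Proof.
move=> hy; have h1 := L_ge1 hy; case/andP: hy => y0 _.
rewrite /loge powRE' ?lnE_div //; rewrite lnE_div // in h1; apply: lt_le_trans h1; exact: ltr01.
Qed.

Definition Gf {R : realType} (v : R) := if v <= 1 then v else v^-1.

Lemma core {R : realType} (x e y C beta g q s c kc : R) :
  0 < x <= 1 -> 0 < e -> 2 * e <= 1 -> 0 < y <= 1 -> 0 <= C ->
  0 < beta -> 0 <= q -> 0 < c -> 2 * c <= beta -> c <= s - q -> 0 <= g ->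
  (x <= e -> 2 * (g * (ln (1 - ln y) - ln (1 - ln (2 * e)))) <= 2 * kc + beta * (ln e - ln x)) ->
  (e < x -> g * (ln (1 - ln y) - ln (1 - ln (2 * e))) <= kc) ->
  powR x beta * loge g y / (powR e q * powR (Num.max x e) (s + beta - q)) *
    ((loge g (2 * e))^-1 * (C * powR (2 * e) s))
  <= C * expR (s * ln 2 + kc) * Gf (powR (x / e) c).
Proof.
move=> /andP[x0 x1] e0 e1 hy C0 b0 q0 c0 cb cs g0 hsm hbig.
have he2 : 0 < 2 * e <= 1 by rewrite e1 mulr_gt0.
have ln2e : ln (2 * e) = ln 2 + ln e by rewrite lnM ?posrE.
have lnxe : ln (x / e) = ln x - ln e by rewrite ln_div ?posrE.
rewrite (logeE _ _ hy) (logeE _ _ he2) !powRE' ?mulr_gt0 ?divr_gt0 ?invr_gt0 ?lt_max ?x0 //.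
rewrite ln2e lnxe.
set lx := ln x; set le := ln e; set l2 := ln 2.
set A := ln (1 - ln y); set B := ln (1 - (l2 + le)).
rewrite -!expRD -expRN -expRD.
have -> : C * expR (s * l2 + kc) * Gf (expR (c * (lx - le))) =
    C * expR (s * l2 + kc + (if x <= e then c * (lx - le) else c * (le - lx))).
  have hle : (lx <= le) = (x <= e) by rewrite /lx /le ler_ln ?posrE.
  rewrite /Gf expR_le1 pmulr_rle0 // subr_le0 hle.
  case: ifPn => hxe; first by rewrite -mulrA -expRD.
  by rewrite -expRN -mulrA -expRD; congr (_ * expR _); lra.
rewrite mulrC -!mulrA mulrCA; apply: ler_wpM2l => //.
rewrite -expRN -!expRD ler_expR.
rewrite ln2e in hsm hbig; rewrite -/lx -/le -/l2 -/A -/B in hsm hbig.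
have hle : (lx <= le) = (x <= e) by rewrite /lx /le ler_ln ?posrE.
case: ifPn => hxe.
  rewrite max_r //; have := hsm hxe.
  have h : 0 <= (beta - 2 * c) * (le - lx) by rewrite mulr_ge0 // subr_ge0 // hle.
  rewrite -/le; lra.
have hex : e < x by rewrite ltNge.
rewrite (max_l (ltW hex)) -/lx; have := hbig hex.
have h : 0 <= (s - q - c) * (lx - le).
  by rewrite mulr_ge0 // subr_ge0 // ?lerBrDl ?addrC -?lerBrDl //; apply: ltW; rewrite ltNge hle.
lra.
Qed.

Lemma ln2_le1 {R : realType} : ln (2 : R) <= 1.
Proof. by have := @le_ln1Dx R 1; rewrite (_ : 1 + 1 = 2) //; apply; rewrite (lt_trans _ ltr01) // ltrN10. Qed.

Lemma ln2_ge0 {R : realType} : 0 <= ln (2 : R).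
Proof. by apply: ln_ge0; rewrite ler1n. Qed.

Lemma L2e_ge1 {R : realType} (e : R) : 0 < e -> 2 * e <= 1 -> 1 <= 1 - ln (2 * e).
Proof. by move=> e0 e1; rewrite lerDl oppr_ge0; apply: ln_le0. Qed.

Lemma Lratio {R : realType} (e : R) : 0 < e -> 2 * e <= 1 ->
  ln (1 - ln e) <= ln 2 + ln (1 - ln (2 * e)).
Proof.
move=> e0 e1; have h1 := L2e_ge1 e e0 e1.
have ln2e : ln (2 * e) = ln 2 + ln e by rewrite lnM ?posrE.
have h2 := @ln2_le1 R.
have h3 := @ln2_ge0 R.
rewrite -lnM ?posrE ?(lt_le_trans ltr01) //; last by rewrite ler1n.
rewrite ler_ln ?posrE ?mulr_gt0 ?(lt_le_trans ltr01) //; rewrite ln2e in h1 *; lra.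
Qed.

Definition aa {R : realType} (beta g : R) := beta / (2 * (g + 1)).
Definition kl {R : realType} (beta g : R) := g * (2 * aa beta g - 1 - ln (aa beta g)).
Definition kcst {R : realType} (beta g : R) := g * ln 2 + `|kl beta g|.

Lemma logpow {R : realType} (g beta z : R) : 0 <= g -> 0 < beta -> 0 <= z ->
  2 * (g * ln (2 + z)) <= 2 * kl beta g + beta * z.
Proof.
move=> g0 b0 z0.
have g1 : 0 < g + 1 by rewrite (lt_le_trans ltr01) // lerDr.
have a0 : 0 < aa beta g by rewrite /aa divr_gt0 // mulr_gt0.
have z2 : 0 < 2 + z by rewrite ltr_wpDr.
have h1 : ln (aa beta g * (2 + z)) <= aa beta g * (2 + z) - 1.
  have := @le_ln1Dx R (aa beta g * (2 + z) - 1).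
  rewrite (_ : 1 + (aa beta g * (2 + z) - 1) = aa beta g * (2 + z)); last by rewrite addrC subrK.
  apply.
  have := mulr_gt0 a0 z2; lra.
rewrite lnM ?posrE // in h1.
have h2 : g * ln (2 + z) <= g * (aa beta g * (2 + z) - 1 - ln (aa beta g)).
  by apply: ler_wpM2l => //; lra.
have h3 : 2 * (g * aa beta g) <= beta.
  have -> : 2 * (g * aa beta g) = beta * (g / (g + 1)).
    by rewrite /aa; field; rewrite gt_eqF.
  by rewrite ger_pMr // ler_pdivrMr // mul1r lerDl.
have h4 : 0 <= (beta - 2 * (g * aa beta g)) * z by rewrite mulr_ge0 // subr_ge0.
rewrite /kl; lra.
Qed.

Lemma kc_ge {R : realType} (beta g : R) : 0 <= g ->
  0 <= g * ln 2 /\ g * ln 2 <= kcst beta g /\ kl beta g <= kcst beta g.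
Proof.
move=> g0; have h := @ln2_ge0 R.
have h1 : 0 <= g * ln 2 by rewrite mulr_ge0.
have h2 := ler_norm (kl beta g); have h3 := normr_ge0 (kl beta g).
rewrite /kcst; split => //; split; lra.
Qed.

Lemma hyp_I4 {R : realType} (x e beta g : R) : 0 < x <= 1 -> 0 < e -> 2 * e <= 1 ->
  0 < beta -> 0 <= g ->
  (x <= e -> 2 * (g * (ln (1 - ln e) - ln (1 - ln (2 * e)))) <=
     2 * kcst beta g + beta * (ln e - ln x)) /\
  (e < x -> g * (ln (1 - ln e) - ln (1 - ln (2 * e))) <= kcst beta g).
Proof.
move=> /andP[x0 x1] e0 e1 b0 g0.
have [k1 [k2 k3]] := kc_ge beta g g0.
have h : g * (ln (1 - ln e) - ln (1 - ln (2 * e))) <= g * ln 2.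
  by apply: ler_wpM2l => //; have := Lratio e e0 e1; lra.
split => [hxe|_]; last lra.
have : 0 <= beta * (ln e - ln x).
  apply: mulr_ge0; first exact: ltW. by rewrite subr_ge0 ler_ln ?posrE.
lra.
Qed.

Lemma hyp_I2 {R : realType} (x e beta g : R) : 0 < x <= 1 -> 0 < e -> 2 * e <= 1 ->
  0 < beta -> 0 <= g ->
  (x <= e -> 2 * (g * (ln (1 - ln x) - ln (1 - ln (2 * e)))) <=
     2 * kcst beta g + beta * (ln e - ln x)) /\
  (e < x -> g * (ln (1 - ln x) - ln (1 - ln (2 * e))) <= kcst beta g).
Proof.
move=> /andP[x0 x1] e0 e1 b0 g0.
have [k1 [k2 k3]] := kc_ge beta g g0.
have ln2e : ln (2 * e) = ln 2 + ln e by rewrite lnM ?posrE.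
have D1 := L2e_ge1 e e0 e1.
have h2 := @ln2_le1 R; have h3 := @ln2_ge0 R.
have lx0 : ln x <= 0 by apply: ln_le0.
split => hxe.
  set z := ln e - ln x.
  have z0 : 0 <= z by rewrite subr_ge0 ler_ln ?posrE.
  have h : ln (1 - ln x) - ln (1 - ln (2 * e)) <= ln (2 + z).
    rewrite lerBlDr -lnM ?posrE; last 2 first.
      - by rewrite ltr_wpDr.
      - by rewrite (lt_le_trans ltr01).
    rewrite ler_ln ?posrE ?mulr_gt0 ?ltr_wpDr ?(lt_le_trans ltr01) //; last lra.
    have : 0 <= (1 - ln (2 * e) - 1) * z by rewrite mulr_ge0 // subr_ge0.
    rewrite /z; rewrite ln2e in D1 *; lra.
    lra.
  have := logpow g beta z g0 b0 z0.
  have : g * (ln (1 - ln x) - ln (1 - ln (2 * e))) <= g * ln (2 + z) by apply: ler_wpM2l.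
  lra.
have h : ln (1 - ln x) <= ln (1 - ln e).
  rewrite ler_ln ?posrE; last 2 first.
  - lra.
  - have : ln e < 0 by apply: ln_lt0; rewrite e0 /=; lra.
    lra.
  have : ln e <= ln x by rewrite ler_ln ?posrE // ltW.
  lra.
have := Lratio e e0 e1.
have : g * (ln (1 - ln x) - ln (1 - ln (2 * e))) <= g * ln 2.
  by apply: ler_wpM2l => //; have := Lratio e e0 e1; lra.
lra.
Qed.

Lemma frac_le {R : realType} (N N' D D' : R) :
  0 <= N -> N <= N' -> 0 < D' -> D' <= D -> N / D <= N' / D'.
Proof.
move=> N0 NN D0 DD.
apply: (@le_trans _ _ (N / D')).
  by apply: ler_wpM2l => //; rewrite lef_pV2 ?posrE // (lt_le_trans D0).
by apply: ler_wpM2r => //; rewrite invr_ge0 ltW.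
Qed.

Definition cc {R : realType} (beta q s : R) := Num.min (beta / 2) (s - q).
Definition Kb {R : realType} (beta g q s C : R) :=
  C * expR (s * ln 2 + kcst beta g) * (2 / (1 - powR 2 (- cc beta q s))).

Lemma upper_gen {R : realType} (mu : {measure set R -> \bar R}) (beta g q s C r : R)
  (N : R -> R) (Y : nat -> R) :
  0 < beta -> 0 <= g -> 0 <= q -> q < s -> 0 <= C -> 0 <= r < 1 ->
  (forall t : R, 0 <= t < 1 ->
    ((loge g (1 - t))%:E * mu `[t, 1%R[%classic <= (C * powR (1 - t) s)%:E)%E) ->
  (forall n, 0 < Y n <= 1) ->
  (forall t, 0 <= t < 1 -> 0 <= N t) ->
  (forall n t, 0 <= t < 1 -> ee R n < 1 - t <= dd R n -> N t <= loge g (Y n)) ->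
  (forall n, (1 - r <= ee R n -> 2 * (g * (ln (1 - ln (Y n)) - ln (1 - ln (2 * ee R n)))) <=
     2 * kcst beta g + beta * (ln (ee R n) - ln (1 - r))) /\
    (ee R n < 1 - r -> g * (ln (1 - ln (Y n)) - ln (1 - ln (2 * ee R n))) <= kcst beta g)) ->
  (\int[mu]_(t in `[0%R, 1%R[%classic)
      (powR (1 - r) beta * N t
        / (powR (1 - t) q * powR (1 - r * t) (s + beta - q)))%:E <= (Kb beta g q s C)%:E)%E.
Proof.
move=> b0 g0 q0 qs C0 /andP[r0 r1] hC hY hN0 hNY hyp.
set x := 1 - r.
have x0 : 0 < x by rewrite subr_gt0.
have x1 : x <= 1 by rewrite lerBlDr lerDl.
set p := s + beta - q.
set a := fun n => powR x beta * loge g (Y n) /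
   (powR (ee R n) q * powR (Num.max x (ee R n)) p).
have a0 : forall n, 0 <= a n.
  by move=> n; rewrite divr_ge0 ?mulr_ge0 ?powR_ge0.
apply: le_trans (@int_le_series _ mu _ a a0 _ _) _.
- move=> t /andP[t0 t1]; apply: divr_ge0; last by rewrite mulr_ge0 ?powR_ge0.
  by apply: mulr_ge0; [exact: powR_ge0 | apply: hN0; rewrite t0 t1].
- move=> n t /andP[t0 t1] /andP[h1 h2].
  have en := ee_gt0 R n.
  apply: frac_le.
  + by apply: mulr_ge0; [exact: powR_ge0 | apply: hN0; rewrite t0 t1].
  + by apply: ler_wpM2l; [exact: powR_ge0 | apply: hNY; rewrite ?t0 ?t1 ?h1 ?h2].
  + by rewrite mulr_gt0 ?powR_gt0 ?lt_max ?x0.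
  + apply: ler_pM; rewrite ?powR_ge0 //.
      by apply: (ge0_ler_powR q0); rewrite ?nnegrE ?ltW // subr_gt0.
    have p0 : 0 <= p by rewrite /p; lra.
    apply: (ge0_ler_powR p0); rewrite ?nnegrE ?le_max ?(ltW x0) //.
      by rewrite subr_ge0 mulr_ile1 // ltW.
    have hrt : 0 <= r * (1 - t) by rewrite mulr_ge0 // subr_ge0 ltW.
    have hrt2 : 0 <= (1 - r) * t by rewrite mulr_ge0 // subr_ge0 ltW.
    rewrite ge_max; apply/andP; split; rewrite /x; lra.
set c := cc beta q s.
have c0 : 0 < c by rewrite /c /cc lt_min divr_gt0 // subr_gt0 qs.
have c2 : 2 * c <= beta.
  have : c <= beta / 2 by rewrite /c /cc ge_min lexx.
  lra.
have cs : c <= s - q by rewrite /c /cc ge_min lexx orbT.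
have dde : forall n, dd R n = 2 * ee R n.
  by move=> n; rewrite /ee /dd exprS invfM mulrA mulfV ?mul1r.
apply: (@series_bound _ mu a (fun n => C * expR (s * ln 2 + kcst beta g) * Gf (powR (x / ee R n) c)) g s C (Kb beta g q s C)) => //.
- move=> n; rewrite dde; have [hsm hbig] := hyp n.
  apply: core => //; rewrite ?x0 ?x1 ?ee_gt0 ?hY //.
  by rewrite -dde dd_le1.
- move=> M; rewrite -mulr_sumr /Kb; apply: ler_wpM2l.
    by rewrite mulr_ge0 // expR_ge0.
  have ln2 : 0 < ln (2 : R) by apply: ln_gt0; rewrite ltr1n.
  apply: geom_sum.
  + rewrite powR_gt0 //= powRE' // expR_lt1 mulNr oppr_lt0 mulr_gt0 //.
  + by move=> n; rewrite powR_gt0 // divr_gt0 // ee_gt0.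
  + move=> n; rewrite -/c.
    have h : x / ee R n.+1 = 2 * (x / ee R n) by rewrite /ee !invrK (exprS _ n.+1) mulrCA.
    rewrite h powRM ?divr_ge0 ?ltW ?ee_gt0 // powRN mulrA mulVf ?mul1r //.
Qed.

Lemma frac_le' {R : realType} (N N' D D' : R) :
  0 <= N -> N <= N' -> 0 < D' -> D' <= D -> N / D <= N' / D'.
Proof.
move=> N0 NN D0 DD.
apply: (@le_trans _ _ (N / D')).
  by apply: ler_wpM2l => //; rewrite lef_pV2 ?posrE // (lt_le_trans D0).
by apply: ler_wpM2r => //; rewrite invr_ge0 ltW.
Qed.

Lemma pw_lower {R : realType} (beta g q s L t0 t : R) :
  0 <= q -> q < s -> 0 < beta -> 0 <= t0 -> t0 <= t -> t < 1 -> loge g (1 - t0) <= L ->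
  loge g (1 - t0) / (powR 2 (s + beta - q) * powR (1 - t0) s) <=
  powR (1 - t0) beta * L / (powR (1 - t) q * powR (1 - t0 * t) (s + beta - q)).
Proof.
move=> q0 qs b0 t00 tt t1 hL.
set p := s + beta - q.
have p0 : 0 <= p by rewrite /p; lra.
have y0 : 0 < 1 - t0 by rewrite subr_gt0 (le_lt_trans tt).
have e : loge g (1 - t0) / (powR 2 p * powR (1 - t0) s) =
  powR (1 - t0) beta * loge g (1 - t0) / (powR (1 - t0) q * powR (2 * (1 - t0)) p).
  rewrite powRM ?ler0n ?ltW //.
  rewrite !powRE' //.
  set ly := ln (1 - t0); set l2 := ln 2.
  have key : expR (q * ly) * expR (p * ly) = expR (beta * ly) * expR (s * ly).
    by rewrite -!expRD; congr expR; rewrite /p; ring.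
  rewrite mulrCA key.
  have h1 := expR_gt0 (beta * ly); have h2 := expR_gt0 (s * ly); have h3 := expR_gt0 (p * l2).
  by field; rewrite ?gt_eqF ?mulr_gt0.
rewrite e; apply: frac_le'.
- by rewrite mulr_ge0 // ?powR_ge0 // /loge powR_ge0.
- by apply: ler_wpM2l => //; rewrite powR_ge0.
- have tt0 : 0 <= t0 * t by rewrite mulr_ge0 // (le_trans t00).
  have : t0 * t < 1.
    by apply: (le_lt_trans (ler_piMl _ _)) => //; rewrite ?(le_trans t00) // ltW // (le_lt_trans tt).
  by move=> h; rewrite mulr_gt0 // powR_gt0 // subr_gt0.
- have t0t : 0 <= t0 * (t - t0) by rewrite mulr_ge0 // subr_ge0.
  have sq : 0 <= (1 - t0) * (1 - t0) by rewrite mulr_ge0 // ltW.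
  have t1t : 0 <= t0 * (1 - t) by rewrite mulr_ge0 // subr_ge0 ltW.
  apply: ler_pM; rewrite ?powR_ge0 //.
    by apply: (ge0_ler_powR q0); rewrite ?nnegrE; lra.
  by apply: (ge0_ler_powR p0); rewrite ?nnegrE; lra.
Qed.

Lemma lower_gen {R : realType} (mu : {measure set R -> \bar R}) (beta g q s C : R)
  (F : R -> R -> R) :
  0 <= q -> q < s -> 0 < beta ->
  (forall t0 t, 0 <= t0 < 1 -> 0 <= t < 1 -> 0 <= F t0 t) ->
  (forall t0 t, 0 <= t0 -> t0 <= t -> t < 1 ->
     loge g (1 - t0) / (powR 2 (s + beta - q) * powR (1 - t0) s) <= F t0 t) ->
  (forall t0, 0 <= t0 < 1 ->
     (\int[mu]_(t in `[0%R, 1%R[%classic) (F t0 t)%:E <= C%:E)%E) ->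
  log_carleson mu g s.
Proof.
move=> q0 qs b0 F0 Fl hI.
set p := s + beta - q.
have K20 : 0 < powR 2 p by rewrite powR_gt0.
exists (powR 2 p * (`|C| + 1)); split.
  by rewrite mulr_gt0 // ltr_wpDl.
move=> t0 /andP[t00 t01].
have y0 : 0 < 1 - t0 by rewrite subr_gt0.
have Y0 : 0 < powR (1 - t0) s by rewrite powR_gt0.
set A := loge g (1 - t0) / (powR 2 p * powR (1 - t0) s).
have A0 : 0 <= A by rewrite divr_ge0 ?powR_ge0 // ltW // mulr_gt0.
pose D : set R := `[0%R, 1%R[%classic.
pose E := `[t0, 1%R[%classic.
have mD : measurable D by exact: measurable_itv.
have mE : measurable E by exact: measurable_itv.
have hA : (A%:E * mu E <= C%:E)%E.
  apply: le_trans (hI t0 _); last by rewrite t00 t01.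
  rewrite -(setIidl (_ : E `<=` D)); last first.
    move=> t; rewrite /E /D /= !in_itv /= => /andP[h1 ->]; rewrite andbT.
    exact: le_trans h1.
  rewrite -(integral_indic _ mD mE).
  rewrite -(integralZl_indic mD (fun=> E) A) //; last first.
    by move=> /lt_le_trans /(_ A0); rewrite ltxx.
  apply: my_le_integral.
    by move=> t _; rewrite lee_fin mulr_ge0.
  move=> t; rewrite /D /= in_itv /= => /andP[t0' t1'].
  rewrite indicE; case: (boolP (t \in E)) => tE.
    rewrite mulr1 lee_fin; apply: Fl => //.
    by move: tE; rewrite /E inE /= in_itv /= => /andP[].
  by rewrite mulr0 lee_fin; apply: F0; rewrite ?t00 ?t01 ?t0' ?t1'.
have eL : loge g (1 - t0) = (powR 2 p * powR (1 - t0) s) * A.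
  by rewrite /A mulrC divfK // gt_eqF // mulr_gt0.
rewrite eL EFinM -muleA.
apply: le_trans (lee_wpmul2l _ hA) _.
  by rewrite lee_fin mulr_ge0 // ltW.
rewrite -EFinM lee_fin mulrAC.
apply: ler_wpM2r; first exact: ltW.
apply: ler_wpM2l; first exact: ltW.
by apply: (le_trans (ler_norm C)); rewrite lerDl.
Qed.

Lemma cmodE {R : realType} (z : R[i]) : `|z| = ((cmod z)%:C)%C.
Proof. by rewrite /cmod normc_def. Qed.

Lemma cmod_ge0 {R : realType} (z : R[i]) : 0 <= cmod z.
Proof. by rewrite /cmod normc_def /= sqrtr_ge0. Qed.

Lemma cmod_real {R : realType} (t : R) : cmod (t%:C)%C = `|t|.
Proof. by rewrite /cmod normc_def /= expr0n addr0 sqrtr_sqr. Qed.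

Lemma cmod_tri {R : realType} (w : R[i]) (t : R) : 0 <= t ->
  1 - cmod w * t <= cmod (1 - w * (t%:C)%C).
Proof.
move=> t0.
have := lerB_dist 1 (w * (t%:C)%C).
rewrite normrM !cmodE cmod_real ger0_norm //.
have -> : cmod (1 : R[i]) = 1 by rewrite -(rmorph1 (real_complex R)) cmod_real normr1.
by rewrite -rmorphM -(rmorph1 (real_complex R)) -rmorphB lecR.
Qed.

Lemma cmod_sub_real {R : realType} (t0 t : R) : 
  cmod (1 - (t0%:C)%C * (t%:C)%C) = `|1 - t0 * t|.
Proof.
by rewrite -rmorphM -(rmorph1 (real_complex R)) -rmorphB cmod_real.
Qed.

Lemma loge_anti {R : realType} (g y z : R) : 0 <= g -> 0 < y -> y <= z -> z <= 1 ->
  loge g z <= loge g y.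
Proof.
move=> g0 y0 yz z1.
have z0 : 0 < z by apply: lt_le_trans yz.
rewrite (logeE g z) ?z0 ?z1 // (logeE g y) ?y0 ?(le_trans yz) // ler_expR.
apply: ler_wpM2l => //.
have lz : ln z <= 0 by apply: ln_le0.
have lyz : ln y <= ln z by rewrite ler_ln ?posrE.
rewrite ler_ln ?posrE; lra.
Qed.

Theorem proposition3p1 (R : realType) (beta g q s : R)
  (mu : {measure set R -> \bar R})
  (hbeta : 0 < beta) (hg : 0 <= g) (hq : 0 <= q) (hqs : q < s)
  (hsupp : mu (~` `[0%R, 1%R[%classic) = 0%E)
  (hfin : (mu `[0%R, 1%R[%classic < +oo)%E) :
  let I2 := fun w : R[i] => (\int[mu]_(t in `[0%R, 1%R[%classic)
      (powR (1 - cmod w) beta * loge g (1 - cmod w)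
        / (powR (1 - t) q * powR (1 - cmod w * t) (s + beta - q)))%:E)%E in
  let I3 := fun w : R[i] => (\int[mu]_(t in `[0%R, 1%R[%classic)
      (powR (1 - cmod w) beta * loge g (1 - cmod w)
        / (powR (1 - t) q * powR (cmod (1 - w * (t%:C)%C)) (s + beta - q)))%:E)%E in
  let I4 := fun w : R[i] => (\int[mu]_(t in `[0%R, 1%R[%classic)
      (powR (1 - cmod w) beta * loge g (1 - t)
        / (powR (1 - t) q * powR (1 - cmod w * t) (s + beta - q)))%:E)%E in
  [/\ (log_carleson mu g s <->
        exists C : R, forall w : R[i], cmod w < 1 -> (I2 w <= C%:E)%E),
      (log_carleson mu g s <->
        exists C : R, forall w : R[i], cmod w < 1 -> (I3 w <= C%:E)%E) &
      (log_carleson mu g s <->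
        exists C : R, forall w : R[i], cmod w < 1 -> (I4 w <= C%:E)%E)].
Proof.
move=> I2 I3 I4.
have eed : forall n, 2 * ee R n <= 1.
  by move=> n; rewrite (_ : 2 * ee R n = dd R n) ?dd_le1 // /ee /dd exprS invfM mulrA mulfV ?mul1r.
have ee1 : forall n, ee R n <= 1.
  move=> n; apply: le_trans (eed n); rewrite ler_peMl ?ler1n //; exact: ltW (ee_gt0 R n).
have car2 : log_carleson mu g s ->
    exists C : R, forall w : R[i], cmod w < 1 -> (I2 w <= C%:E)%E.
  case=> C [C0 hC]; exists (Kb beta g q s C) => w hw.
  have r0 := cmod_ge0 w.
  have x0 : 0 < 1 - cmod w <= 1 by rewrite subr_gt0 hw /= lerBlDr lerDl.
  apply: (@upper_gen R mu beta g q s C (cmod w) (fun _ => loge g (1 - cmod w))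
    (fun _ => 1 - cmod w)) => //.
  - exact: ltW.
  - by rewrite r0 hw.
  - by move=> t _; rewrite /loge powR_ge0.
  - by move=> n; apply: hyp_I2 => //; rewrite ?ee_gt0 ?eed.
have car4 : log_carleson mu g s ->
    exists C : R, forall w : R[i], cmod w < 1 -> (I4 w <= C%:E)%E.
  case=> C [C0 hC]; exists (Kb beta g q s C) => w hw.
  have r0 := cmod_ge0 w.
  have x0 : 0 < 1 - cmod w <= 1 by rewrite subr_gt0 hw /= lerBlDr lerDl.
  apply: (@upper_gen R mu beta g q s C (cmod w) (fun t => loge g (1 - t))
    (fun n => ee R n)) => //.
  - exact: ltW.
  - by rewrite r0 hw.
  - by move=> n; rewrite ee_gt0 ee1.
  - by move=> t _; rewrite /loge powR_ge0.
  - move=> n t /andP[t0 t1] /andP[h1 h2]; apply: loge_anti => //.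
      exact: ee_gt0.
    exact: ltW.
    by rewrite lerBlDr lerDl.
  - by move=> n; apply: hyp_I4 => //; rewrite ?ee_gt0 ?eed.
have car3 : log_carleson mu g s ->
    exists C : R, forall w : R[i], cmod w < 1 -> (I3 w <= C%:E)%E.
  move=> /car2 [C hC]; exists C => w hw.
  apply: le_trans (hC w hw); rewrite /I2 /I3.
  have r0 := cmod_ge0 w.
  apply: my_le_integral.
    by move=> t _; rewrite lee_fin divr_ge0 ?mulr_ge0 ?powR_ge0 // /loge powR_ge0.
  move=> t; rewrite /= in_itv /= => /andP[t0 t1]; rewrite lee_fin.
  apply: frac_le.
  - by rewrite mulr_ge0 ?powR_ge0 // /loge powR_ge0.
  - exact: lexx.
  - have : cmod w * t < 1.
      apply: (le_lt_trans (ler_piMr _ _)) => //; exact: ltW.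
    by move=> h; rewrite mulr_gt0 // powR_gt0 // subr_gt0.
  - apply: ler_wpM2l; first exact: powR_ge0.
    apply: ge0_ler_powR; rewrite ?nnegrE ?cmod_ge0 //; last exact: cmod_tri.
      lra.
    have : cmod w * t <= 1.
      apply: (le_trans (ler_piMr _ _)) => //; exact: ltW.
    by rewrite subr_ge0.
set p := s + beta - q.
pose F2 := fun t0 t : R => powR (1 - t0) beta * loge g (1 - t0)
   / (powR (1 - t) q * powR (1 - t0 * t) p).
pose F4 := fun t0 t : R => powR (1 - t0) beta * loge g (1 - t)
   / (powR (1 - t) q * powR (1 - t0 * t) p).
have F20 : forall t0 t, 0 <= t0 < 1 -> 0 <= t < 1 -> 0 <= F2 t0 t.
  by move=> t0 t _ _; rewrite /F2 divr_ge0 ?mulr_ge0 ?powR_ge0 // /loge powR_ge0.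
have F40 : forall t0 t, 0 <= t0 < 1 -> 0 <= t < 1 -> 0 <= F4 t0 t.
  by move=> t0 t _ _; rewrite /F4 divr_ge0 ?mulr_ge0 ?powR_ge0 // /loge powR_ge0.
have F2l : forall t0 t, 0 <= t0 -> t0 <= t -> t < 1 ->
     loge g (1 - t0) / (powR 2 p * powR (1 - t0) s) <= F2 t0 t.
  by move=> t0 t h1 h2 h3; apply: pw_lower.
have F4l : forall t0 t, 0 <= t0 -> t0 <= t -> t < 1 ->
     loge g (1 - t0) / (powR 2 p * powR (1 - t0) s) <= F4 t0 t.
  move=> t0 t h1 h2 h3; apply: pw_lower => //.
  apply: loge_anti => //; rewrite ?subr_gt0 //; lra.
have lo2 : (exists C : R, forall w : R[i], cmod w < 1 -> (I2 w <= C%:E)%E) ->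
    log_carleson mu g s.
  case=> C hC; apply: (@lower_gen R mu beta g q s C F2) => //.
  move=> t0 /andP[t00 t01]; have := hC (t0%:C)%C.
  by rewrite /I2 cmod_real ger0_norm //; apply.
have lo4 : (exists C : R, forall w : R[i], cmod w < 1 -> (I4 w <= C%:E)%E) ->
    log_carleson mu g s.
  case=> C hC; apply: (@lower_gen R mu beta g q s C F4) => //.
  move=> t0 /andP[t00 t01]; have := hC (t0%:C)%C.
  by rewrite /I4 cmod_real ger0_norm //; apply.
have lo3 : (exists C : R, forall w : R[i], cmod w < 1 -> (I3 w <= C%:E)%E) ->
    log_carleson mu g s.
  case=> C hC; apply: (@lower_gen R mu beta g q s C F2) => //.
  move=> t0 /andP[t00 t01]; have := hC (t0%:C)%C.
  rewrite /I3 cmod_real ger0_norm // => /(_ t01).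
  move=> h; apply: le_trans h; rewrite le_eqVlt; apply/orP; left; apply/eqP.
  apply: eq_integral => t.
  rewrite inE /= in_itv /= => /andP[ht0 ht1].
  rewrite cmod_sub_real ger0_norm //.
  have : 0 <= t0 * (1 - t) by rewrite mulr_ge0 // subr_ge0 ltW.
  lra.
by split; split.
Qed.
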